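(* Let $\{p_\theta:\theta\in\Omega\subseteq\mathbb{R}\}$ be DQM in a neighborhood of $0$ with score $T\in L^2(p_0)$ at $\theta=0$. Let $\mathcal F$ be a set of real-valued functions and suppose there is $B>0$ such that for every $f\in\mathcal F$: $\mathbb{E}_\theta f^2<B$ for all $\theta$ in a neighborhood of $0$, and $\mathbb{E}_0|f^2T|<B$, $\mathbb{E}_0|fT^2|<B$, $\mathbb{E}_0 f^2T^2<B$. Then as $\theta\to0$, $$\sup_{f\in\mathcal F}\big|\mathbb{E}_\theta f-(\mathbb{E}_0 f+\theta\,\mathbb{E}_0 fT)\big|=o(|\theta|).$$
   Context: DQM at $0$ with score $T$: $\sqrt{p_\theta(x)}=\sqrt{p_0(x)}(1+\theta T(x)/2)+r_\theta(x)$ with $\int r_\theta^2\,d\nu=o(\theta^2)$, densities taken with respect to a dominating measure $\nu$. $\mathbb{E}_\theta$ denotes expectation under $p_\theta$. *)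

(* Defs.v *)
From HB Require Import structures.
From mathcomp Require Import all_boot all_order all_algebra.
From mathcomp Require Import all_classical all_reals all_analysis.
Set Implicit Arguments. Unset Strict Implicit. Unset Printing Implicit Defensive.
Import Order.TTheory GRing.Theory Num.Theory.
Import numFieldNormedType.Exports.
Local Open Scope classical_set_scope.
Local Open Scope ring_scope.

Definition is_density {d} {X : measurableType d} {R : realType}
  (mu : {measure set X -> \bar R}) (q : X -> R) : Prop :=
  [/\ measurable_fun setT q, (forall x, 0 <= q x)
    & (\int[mu]_x (q x)%:E = 1)%E].

Definition Ex {d} {X : measurableType d} {R : realType}
  (mu : {measure set X -> \bar R}) (q : X -> R) (f : X -> R) : R :=
  fine (\int[mu]_x (f x * q x)%:E).

Definition DQM0 {d} {X : measurableType d} {R : realType}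
  (mu : {measure set X -> \bar R}) (p : R -> X -> R) (T : X -> R) : Prop :=
  forall e : R, 0 < e -> \forall t \near (0 : R),
    (\int[mu]_x (((Num.sqrt (p t x)
        - Num.sqrt (p 0 x) * (1 + t * T x / 2)) ^+ 2)%:E)
      <= (e * t ^+ 2)%:E)%E.

(* Main.v *)
Require Import Defs.
From HB Require Import structures.
From mathcomp Require Import all_boot all_order all_algebra.
From mathcomp Require Import all_classical all_reals all_analysis.
From mathcomp Require Import ring lra.
Import Order.TTheory GRing.Theory Num.Theory.
Import numFieldNormedType.Exports.
Local Open Scope classical_set_scope.
Local Open Scope ring_scope.

Section PW.
Variable R : realType.

Lemma sqrN (x : R) : `|x| ^+ 2 = x ^+ 2.
Proof. exact: real_normK (num_real x). Qed.

Lemma amgm (a b k : R) : 0 < k -> 2 * `|a * b| <= k * a ^+ 2 + b ^+ 2 / k.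
Proof.
move=> k0; rewrite normrM -(sqrN a) -(sqrN b).
have h : 0 <= (k * `|a| - `|b|) ^+ 2 / k by rewrite divr_ge0 ?sqr_ge0 ?ltW.
suff -> : k * `|a| ^+ 2 + `|b| ^+ 2 / k = (k * `|a| - `|b|) ^+ 2 / k + 2 * (`|a| * `|b|).
  by lra.
by field; rewrite gt_eqF.
Qed.

Lemma pw' (t c e f Tx s s0 r : R) : 0 < c -> 0 < e ->
  r = s - s0 * (1 + t * Tx / 2) ->
  `|t| * `|f * s ^+ 2 - f * s0 ^+ 2 - t * (f * Tx * s0 ^+ 2)| <=
   c / 2 * r ^+ 2 + t ^+ 2 / c * (f ^+ 2 * s ^+ 2) + t ^+ 2 / c * (f ^+ 2 * s0 ^+ 2)
   + `|t| ^+ 3 / 4 * (`|f * Tx ^+ 2| * s0 ^+ 2)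
   + t ^+ 2 * e / 4 * (f ^+ 2 * Tx ^+ 2 * s0 ^+ 2) + t ^+ 2 / (4 * e) * r ^+ 2.
Proof.
move=> c0 e0 hr.
have -> : f * s ^+ 2 - f * s0 ^+ 2 - t * (f * Tx * s0 ^+ 2) =
  f * r * (s + s0) + t ^+ 2 / 4 * (f * Tx ^+ 2) * s0 ^+ 2
  + t / 2 * ((f * Tx * s0) * r).
  by rewrite hr; field.
have hA := amgm r (t * f * (s + s0)) c c0.
have hC := amgm (f * Tx * s0) r e e0.
have hS : (s + s0) ^+ 2 <= 2 * (s ^+ 2 + s0 ^+ 2).
  have := sqr_ge0 (s - s0); lra.
have e1 : `|t| * `|f * r * (s + s0)| = `|r * (t * f * (s + s0))|.
  by rewrite !normrM; ring.
have e2 : `|t| * `|t ^+ 2 / 4 * (f * Tx ^+ 2) * s0 ^+ 2| = `|t| ^+ 3 / 4 * (`|f * Tx ^+ 2| * s0 ^+ 2).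
  rewrite !normrM normfV (ger0_norm (_ : (0:R) <= 4)) // -(sqrN s0); ring.
have e3 : `|t| * `|t / 2 * (f * Tx * s0 * r)| = t ^+ 2 / 2 * `|f * Tx * s0 * r|.
  rewrite !normrM normfV (ger0_norm (_ : (0:R) <= 2)) // -(sqrN t); ring.
have hN : `|t| * `|f * r * (s + s0) + t ^+ 2 / 4 * (f * Tx ^+ 2) * s0 ^+ 2 +
     t / 2 * (f * Tx * s0 * r)| <= `|t| * `|f * r * (s + s0)| + 
    `|t| * `|t ^+ 2 / 4 * (f * Tx ^+ 2) * s0 ^+ 2| + `|t| * `|t / 2 * (f * Tx * s0 * r)|.
  rewrite -!mulrDr; apply: ler_wpM2l => //; apply: (le_trans (ler_normD _ _)).
  by rewrite lerD2r ler_normD.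
rewrite e1 e2 e3 in hN.
apply: (le_trans hN).
have t2 : 0 <= t ^+ 2 by exact: sqr_ge0.
have X1 : (t * f * (s + s0)) ^+ 2 / c <= 2 * (t ^+ 2 / c * (f ^+ 2 * s ^+ 2) + t ^+ 2 / c * (f ^+ 2 * s0 ^+ 2)).
  rewrite exprMn exprMn.
  have -> : 2 * (t ^+ 2 / c * (f ^+ 2 * s ^+ 2) + t ^+ 2 / c * (f ^+ 2 * s0 ^+ 2)) =
     t ^+ 2 * f ^+ 2 * (2 * (s ^+ 2 + s0 ^+ 2)) / c by ring.
  rewrite ler_pM2r ?invr_gt0 //; apply: ler_wpM2l => //; rewrite mulr_ge0 ?sqr_ge0 //.
have X2 : t ^+ 2 / 2 * `|f * Tx * s0 * r| <= t ^+ 2 / 2 / 2 * (e * (f * Tx * s0) ^+ 2 + r ^+ 2 / e).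
  have -> : t ^+ 2 / 2 / 2 * (e * (f * Tx * s0) ^+ 2 + r ^+ 2 / e) =
    t ^+ 2 / 2 * ((e * (f * Tx * s0) ^+ 2 + r ^+ 2 / e) / 2) by ring.
  apply: ler_wpM2l; first by rewrite divr_ge0.
  lra.
have E : t ^+ 2 / 2 / 2 * (e * (f * Tx * s0) ^+ 2 + r ^+ 2 / e) =
   t ^+ 2 * e / 4 * (f ^+ 2 * Tx ^+ 2 * s0 ^+ 2) + t ^+ 2 / (4 * e) * r ^+ 2.
  by field; rewrite gt_eqF.
rewrite E in X2.
have -> : c / 2 * r ^+ 2 = c * r ^+ 2 / 2 by ring.
lra.
Qed.
End PW.

Section M.
Context d (X : measurableType d) (R : realType) (mu : {measure set X -> \bar R}).

Ltac meas := repeat first [ exact: measurable_cst | assumption | apply: measurable_realfun.measurable_funM | apply: measurable_realfun.measurable_funD | apply: measurable_realfun.measurable_funB | apply: measurable_realfun.measurable_funX | apply: measurable_realfun.measurable_funN | (apply: measurableT_comp; [exact: measurable_realfun.normr_measurable | ]) | (apply: measurableT_comp; [exact: (measurable_realfun.continuous_measurable_fun (@sqrt_continuous R))|]) ].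

Ltac nn := repeat first [ exact: sqr_ge0 | exact: normr_ge0 | assumption | (apply: ltW; assumption) | done | apply: addr_ge0 | apply: mulr_ge0 | rewrite invr_ge0 | apply: exprn_ge0 | (match goal with H : forall y, 0 <= _ |- _ => apply: H end) ].

Lemma int_scal (k : R) (h : X -> R) (b : R) : 0 <= k -> measurable_fun setT h ->
  (forall x, 0 <= h x) -> (\int[mu]_x (h x)%:E <= b%:E)%E ->
  (\int[mu]_x (k * h x)%:E <= (k * b)%:E)%E.
Proof.
move=> k0 mh h0 hb.
under eq_integral do rewrite EFinM.
rewrite ge0_integralZl_EFin //; last first.
  - exact/measurable_realfun.measurable_EFinP.
  - by move=> x _; rewrite lee_fin.
by rewrite EFinM; apply: lee_wpmul2l; rewrite ?lee_fin.
Qed.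

Lemma int_add (h1 h2 : X -> R) (b1 b2 : R) :
  measurable_fun setT h1 -> measurable_fun setT h2 ->
  (forall x, 0 <= h1 x) -> (forall x, 0 <= h2 x) ->
  (\int[mu]_x (h1 x)%:E <= b1%:E)%E -> (\int[mu]_x (h2 x)%:E <= b2%:E)%E ->
  (\int[mu]_x (h1 x + h2 x)%:E <= (b1 + b2)%:E)%E.
Proof.
move=> m1 m2 p1 p2 i1 i2.
under eq_integral do rewrite EFinD.
rewrite ge0_integralD //.
- by rewrite EFinD; apply: leeD.
- by move=> x _; rewrite lee_fin.
- exact/measurable_realfun.measurable_EFinP.
- by move=> x _; rewrite lee_fin.
- exact/measurable_realfun.measurable_EFinP.
Qed.

Lemma integrable_le (h g : X -> R) : measurable_fun setT h -> measurable_fun setT g ->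
  (forall x, `|h x| <= g x) -> (\int[mu]_x (g x)%:E < +oo)%E ->
  mu.-integrable setT (EFin \o h).
Proof.
move=> mh mg hg gi.
apply: (@le_integrable _ _ _ mu setT measurableT _ (EFin \o g)).
- exact/measurable_realfun.measurable_EFinP.
- move=> x _ /=; rewrite lee_fin (le_trans (hg x)) //.
  exact: ler_norm.
apply/integrableP; split; first exact/measurable_realfun.measurable_EFinP.
rewrite (eq_integral (fun x => (g x)%:E)) // => x _.
by rewrite /= ger0_norm // (le_trans _ (hg x)).
Qed.

Lemma integrable_w (w Q : X -> R) (B : R) : measurable_fun setT w -> measurable_fun setT Q ->
  (forall x, 0 <= Q x) -> (\int[mu]_x (Q x)%:E = 1)%E ->
  (\int[mu]_x (w x ^+ 2 * Q x)%:E < B%:E)%E ->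
  mu.-integrable setT (EFin \o (fun x => w x * Q x)).
Proof.
move=> mw mQ Q0 Q1 wB.
apply: (@integrable_le _ (fun x => 2^-1 * Q x + 2^-1 * (w x ^+ 2 * Q x))); first by meas.
- by meas.
- move=> x; rewrite normrM (ger0_norm (Q0 x)).
  have := sqr_ge0 (`|w x| - 1); rewrite -(real_normK (num_real (w x))).
  have := Q0 x; nra.
apply: (@le_lt_trans _ _ ((2^-1 * 1 + 2^-1 * B)%:E)); last by rewrite ltry.
apply: int_add; try by meas.
- by move=> x; apply: mulr_ge0; [rewrite invr_ge0 | exact: Q0].
- move=> x; apply: mulr_ge0; first by rewrite invr_ge0.
  by apply: mulr_ge0; [exact: sqr_ge0 | exact: Q0].
- by apply: int_scal => //; rewrite ?invr_ge0 ?Q1.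
- apply: int_scal; rewrite ?invr_ge0 //; first by meas.
    by move=> x; apply: mulr_ge0; [exact: sqr_ge0 | exact: Q0].
  exact: ltW.
Qed.


Lemma core (P Q T f : X -> R) (t c e dl B : R) :
  measurable_fun setT P -> measurable_fun setT Q -> measurable_fun setT T ->
  measurable_fun setT f ->
  (forall x, 0 <= P x) -> (forall x, 0 <= Q x) ->
  (\int[mu]_x (P x)%:E = 1)%E -> (\int[mu]_x (Q x)%:E = 1)%E ->
  0 < c -> 0 < e ->
  (\int[mu]_x ((Num.sqrt (P x) - Num.sqrt (Q x) * (1 + t * T x / 2)) ^+ 2)%:E
     <= (dl * t ^+ 2)%:E)%E ->
  (\int[mu]_x (f x ^+ 2 * P x)%:E < B%:E)%E ->
  (\int[mu]_x (f x ^+ 2 * Q x)%:E < B%:E)%E ->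
  (\int[mu]_x (`|f x * T x ^+ 2| * Q x)%:E < B%:E)%E ->
  (\int[mu]_x (f x ^+ 2 * T x ^+ 2 * Q x)%:E < B%:E)%E ->
  `|t| * `| fine (\int[mu]_x (f x * P x)%:E) - (fine (\int[mu]_x (f x * Q x)%:E)
      + t * fine (\int[mu]_x (f x * T x * Q x)%:E)) |
   <= c / 2 * (dl * t ^+ 2) + t ^+ 2 / c * B + t ^+ 2 / c * B + `|t| ^+ 3 / 4 * B
      + t ^+ 2 * e / 4 * B + t ^+ 2 / (4 * e) * (dl * t ^+ 2).
Proof.
move=> mP mQ mT mf P0 Q0 P1 Q1 c0 e0 hr hfP hfQ hfT2 hfT.
have i1 := integrable_w _ _ _ mf mP P0 P1 hfP.
have i2 := integrable_w _ _ _ mf mQ Q0 Q1 hfQ.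
have i3 : mu.-integrable setT (EFin \o (fun x => f x * T x * Q x)).
  apply: (@integrable_w (fun x => f x * T x) Q B) => //; first by meas.
  by under eq_integral do rewrite exprMn.
have i12 : mu.-integrable setT (EFin \o (fun x => f x * P x - f x * Q x)).
  apply: (eq_integrable measurableT _ _ _ (@integrableB _ _ _ mu setT measurableT _ _ i1 i2)) => x _.
  by rewrite /= EFinB.
have i3t : mu.-integrable setT (EFin \o (fun x => t * (f x * T x * Q x))).
  apply: (eq_integrable measurableT _ _ _ (@integrableZl _ _ _ mu setT measurableT t _ i3)) => x _.
  by rewrite /= EFinM.
have fa : (\int[mu]_x (f x * P x)%:E)%E \is a fin_num := integrable_fin_num measurableT i1.
have fb : (\int[mu]_x (f x * Q x)%:E)%E \is a fin_num := integrable_fin_num measurableT i2.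
have fc : (\int[mu]_x (f x * T x * Q x)%:E)%E \is a fin_num := integrable_fin_num measurableT i3.
set a := (\int[mu]_x (f x * P x)%:E)%E in fa *.
set b := (\int[mu]_x (f x * Q x)%:E)%E in fb *.
set c1 := (\int[mu]_x (f x * T x * Q x)%:E)%E in fc *.
pose g x := f x * P x - f x * Q x - t * (f x * T x * Q x).
have E : (\int[mu]_x (g x)%:E = (fine a - fine b - t * fine c1)%:E)%E.
  rewrite /g; under eq_integral do rewrite EFinB.
  rewrite (@integralB_EFin _ _ _ mu setT _ _ measurableT i12 i3t).
  under eq_integral do rewrite EFinB.
  rewrite (@integralB_EFin _ _ _ mu setT _ _ measurableT i1 i2).
  under [X in (_ - X)%E]eq_integral do rewrite EFinM.
  rewrite (integralZl measurableT i3).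
  by rewrite -/a -/b -/c1 -(fineK fa) -(fineK fb) -(fineK fc) -EFinM -!EFinB.
have -> : fine a - (fine b + t * fine c1) = fine a - fine b - t * fine c1.
  by rewrite opprD addrA.
pose r x := Num.sqrt (P x) - Num.sqrt (Q x) * (1 + t * T x / 2).
pose H x := c / 2 * r x ^+ 2 + t ^+ 2 / c * (f x ^+ 2 * P x) + t ^+ 2 / c * (f x ^+ 2 * Q x)
   + `|t| ^+ 3 / 4 * (`|f x * T x ^+ 2| * Q x)
   + t ^+ 2 * e / 4 * (f x ^+ 2 * T x ^+ 2 * Q x) + t ^+ 2 / (4 * e) * r x ^+ 2.
have mH : measurable_fun setT H by rewrite /H /r; meas.
rewrite -lee_fin.
have step1 : ((`|t| * `|fine a - fine b - t * fine c1|)%:E <= \int[mu]_x (H x)%:E)%E.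
  rewrite EFinM -[`|_ - _|%:E]abse_EFin -E.
  apply: (le_trans (lee_wpmul2l _ (le_abse_integral mu measurableT _))).
  - by rewrite lee_fin.
  - by apply/measurable_realfun.measurable_EFinP; rewrite /g; meas.
  under eq_integral do rewrite abse_EFin.
  rewrite -ge0_integralZl_EFin //; last first.
    by apply/measurable_realfun.measurable_EFinP; rewrite /g; meas.
  apply: ge0_le_integral => //.
  - apply: measurable_funeM.
    by apply/measurable_realfun.measurable_EFinP; rewrite /g; meas.
  - exact/measurable_realfun.measurable_EFinP.
  move=> x _; rewrite -EFinM lee_fin.
  have := @pw' R t c e (f x) (T x) (Num.sqrt (P x)) (Num.sqrt (Q x)) (r x) c0 e0 (erefl (r x)).
  by rewrite !sqr_sqrtr.
apply: (le_trans step1).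
rewrite /H.
apply: int_add; [by rewrite /r; meas|by rewrite /r; meas|by move=> x; nn|by move=> x; nn| |].
apply: int_add; [by rewrite /r; meas|by rewrite /r; meas|by move=> x; nn|by move=> x; nn| |].
apply: int_add; [by rewrite /r; meas|by rewrite /r; meas|by move=> x; nn|by move=> x; nn| |].
apply: int_add; [by rewrite /r; meas|by rewrite /r; meas|by move=> x; nn|by move=> x; nn| |].
apply: int_add; [by rewrite /r; meas|by rewrite /r; meas|by move=> x; nn|by move=> x; nn| |].
all: apply: int_scal; [by nn | by rewrite /r; meas | by move=> x; nn | ].
all: try exact: hr.
all: exact: ltW.
Qed.

Lemma main_thm (p : R -> X -> R) (T : X -> R) (F : set (X -> R)) :
  (\forall t \near (0 : R), [/\ measurable_fun setT (p t), (forall x, 0 <= p t x)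
    & (\int[mu]_x ((p t x)%:E) = 1)%E]) ->
  (forall e : R, 0 < e -> \forall t \near (0 : R),
    (\int[mu]_x (((Num.sqrt (p t x)
        - Num.sqrt (p 0 x) * (1 + t * T x / 2)) ^+ 2)%:E)
      <= (e * t ^+ 2)%:E)%E) ->
  measurable_fun setT T ->
  (forall f, F f -> measurable_fun setT f) ->
  (exists2 B : R, 0 < B &
     (\forall t \near (0 : R), forall f, F f ->
        (\int[mu]_x ((f x ^+ 2 * p t x)%:E) < B%:E)%E) /\
     (forall f, F f ->
        [/\ (\int[mu]_x ((`|f x ^+ 2 * T x| * p 0 x)%:E) < B%:E)%E,
            (\int[mu]_x ((`|f x * T x ^+ 2| * p 0 x)%:E) < B%:E)%E
          & (\int[mu]_x ((f x ^+ 2 * T x ^+ 2 * p 0 x)%:E) < B%:E)%E])) ->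
  forall e : R, 0 < e -> \forall t \near (0 : R), forall f, F f ->
    `| fine (\int[mu]_x (f x * p t x)%:E) - (fine (\int[mu]_x (f x * p 0 x)%:E)
       + t * fine (\int[mu]_x (f x * T x * p 0 x)%:E)) | <= e * `|t|.
Proof.
move=> hd hdqm mT mF [B B0 [hB hB0]] e e0.
pose c := 8 * B / e.
pose eta := e / B.
pose dl := e / (4 * (c / 2 + 1 / (4 * eta))).
have c0 : 0 < c by rewrite /c divr_gt0 // mulr_gt0.
have eta0 : 0 < eta by rewrite /eta divr_gt0.
have dl0 : 0 < dl.
  rewrite /dl; apply: divr_gt0 => //; apply: mulr_gt0 => //; apply: addr_gt0.
    exact: divr_gt0.
  by apply: divr_gt0 => //; apply: mulr_gt0.
have hdl := hdqm dl dl0.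
have d0 := nbhs_singleton hd.
have hB0' := nbhs_singleton hB.
case: d0 => mp0 p00 p01.
have s1 := nbhs0_lt (K := R) (V := R^o) (ltr01 : (0:R) < 1).
have s2 := nbhs0_lt (K := R) (V := R^o) eta0.
near=> t => f Ff.
have [mpt pt0 pt1] : [/\ measurable_fun setT (p t), (forall x, 0 <= p t x)
    & (\int[mu]_x ((p t x)%:E) = 1)%E] by near: t.
have hBt : forall f, F f -> (\int[mu]_x ((f x ^+ 2 * p t x)%:E) < B%:E)%E by near: t.
have hr : (\int[mu]_x (((Num.sqrt (p t x)
        - Num.sqrt (p 0 x) * (1 + t * T x / 2)) ^+ 2)%:E)
      <= (dl * t ^+ 2)%:E)%E by near: t.
have t1 : `|t| < 1 by near: t.
have t2 : `|t| < eta by near: t.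
case: (hB0 f Ff) => _ hfT2 hfT.
have := core (p t) (p 0) T f t c eta dl B mpt mp0 mT (mF f Ff) pt0 p00 pt1 p01 c0 eta0 hr
  (hBt f Ff) (hB0' f Ff) hfT2 hfT.
have [t0|tn0] := eqVneq t 0.
  by move=> _; rewrite t0 mul0r addr0 subrr normr0 mulr0.
set D := `| _ - _ |.
move=> hcore.
have u0 : 0 < `|t| by rewrite normr_gt0.
rewrite -(real_normK (num_real t)) in hcore.
set u := `|t| in hcore u0 t1 t2 *.
have E1 : dl * (c / 2 + 1 / (4 * eta)) = e / 4.
  have K0 : c / 2 + 1 / (4 * eta) != 0.
    rewrite gt_eqF //; apply: addr_gt0; first exact: divr_gt0.
    by apply: divr_gt0 => //; apply: mulr_gt0.
  rewrite /dl; field; rewrite (gt_eqF eta0) /= gt_eqF //.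
  by apply: addr_gt0 => //; apply: mulr_gt0 => //; apply: mulr_gt0.
have E2 : B / c = e / 8 by rewrite /c; field; rewrite ?gt_eqF.
have E3 : eta * B = e by rewrite /eta; field; rewrite gt_eqF.
have U1 : u ^+ 2 * u ^+ 2 <= u ^+ 2.
  rewrite -[X in _ <= X]mul1r; apply: ler_wpM2r; first exact: sqr_ge0.
  have : u * u <= 1 * 1 by apply: ler_pM; rewrite ?ltW.
  by rewrite mul1r expr2.
have U2 : u * B <= e by rewrite -E3 ler_pM2r // ltW.
have X1 : dl * (1 / (4 * eta)) * (u ^+ 2 * u ^+ 2) <= dl * (1 / (4 * eta)) * u ^+ 2.
  apply: ler_wpM2l => //; apply: mulr_ge0; first exact: ltW.
  by rewrite mul1r invr_ge0 mulr_ge0 // ltW.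
have X2 : u * B / 4 * u ^+ 2 <= e / 4 * u ^+ 2.
  by apply: ler_wpM2r; [exact: sqr_ge0 | lra].
have HH : c / 2 * (dl * u ^+ 2) + u ^+ 2 / c * B + u ^+ 2 / c * B + u ^+ 3 / 4 * B +
   u ^+ 2 * eta / 4 * B + u ^+ 2 / (4 * eta) * (dl * u ^+ 2) <= u * (e * u).
  have -> : c / 2 * (dl * u ^+ 2) + u ^+ 2 / c * B + u ^+ 2 / c * B + u ^+ 3 / 4 * B +
     u ^+ 2 * eta / 4 * B + u ^+ 2 / (4 * eta) * (dl * u ^+ 2) =
     dl * (c / 2) * u ^+ 2 + dl * (1 / (4 * eta)) * (u ^+ 2 * u ^+ 2) + 2 * (B / c) * u ^+ 2
     + u * B / 4 * u ^+ 2 + (eta * B) / 4 * u ^+ 2 by ring.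
  have -> : u * (e * u) = (dl * (c / 2 + 1 / (4 * eta)) + 2 * (e / 8) + e / 4 + e / 4) * u ^+ 2.
    by rewrite E1; field.
  rewrite E2 E3 mulrDr.
  set v := u ^+ 2 in X1 X2 *.
  set w := u ^+ 2 * u ^+ 2 in X1 *.
  lra.
have := le_trans hcore HH.
by rewrite ler_pM2l.
Unshelve. all: by end_near.
Qed.

End M.

Theorem lemma3 (d : measure_display) (X : measurableType d) (R : realType)
  (mu : {measure set X -> \bar R}) (p : R -> X -> R) (T : X -> R)
  (F : set (X -> R)) :
  (* the model is a family of probability densities on a neighbourhood of 0 *)
  (\forall t \near (0 : R), is_density mu (p t)) ->
  (* DQM at 0 with score T, and T in L^2(p_0) *)
  DQM0 mu p T ->
  measurable_fun setT T ->
  (\int[mu]_x ((T x ^+ 2 * p 0 x)%:E) < +oo)%E ->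
  (* the function class *)
  (forall f, F f -> measurable_fun setT f) ->
  (exists2 B : R, 0 < B &
     (\forall t \near (0 : R), forall f, F f ->
        (\int[mu]_x ((f x ^+ 2 * p t x)%:E) < B%:E)%E) /\
     (forall f, F f ->
        [/\ (\int[mu]_x ((`|f x ^+ 2 * T x| * p 0 x)%:E) < B%:E)%E,
            (\int[mu]_x ((`|f x * T x ^+ 2| * p 0 x)%:E) < B%:E)%E
          & (\int[mu]_x ((f x ^+ 2 * T x ^+ 2 * p 0 x)%:E) < B%:E)%E])) ->
  (* sup_{f in F} |E_t f - (E_0 f + t E_0 fT)| = o(|t|) as t -> 0 *)
  forall e : R, 0 < e -> \forall t \near (0 : R), forall f, F f ->
    `| Ex mu (p t) f - (Ex mu (p 0) f + t * Ex mu (p 0) (fun x => f x * T x)) |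
      <= e * `|t|.
Proof.
move=> hd hdqm mT _ mF hB e e0.
exact: (@main_thm _ _ _ mu p T F hd hdqm mT mF hB e e0).
Qed.
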